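(* Let $X$ be a space with base point $*$ and $C$ a locally trivial $X$-groupoid with $\Omega_C=C_*^*$. Then $C$ is Hausdorff if and only if $X$ and $\Omega_C$ are Hausdorff.
   Context: $X$-groupoid: a space $C$ with continuous source/target $\alpha,\beta:C\to X$, continuous associative partial composition on $\{(c_1,c_2):\alpha(c_1)=\beta(c_2)\}$ with $\alpha(c_1c_2)=\alpha(c_2)$, $\beta(c_1c_2)=\beta(c_1)$, continuous units $i_x$ and continuous inversion $C_x^y\to C_y^x$, where $C_x=\alpha^{-1}(x)$, $C^y=\beta^{-1}(y)$, $C^y_x=C_x\cap C^y$. A $C$-contraction is a continuous $\rho:U_\rho\to C^*$, $U_\rho\subset X$ open, with $\alpha(\rho(x))=x$; $C$ is locally trivial if the $U_\rho$ cover $X$. *)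

(* Defs.v *)
From HB Require Import structures.
From mathcomp Require Import all_boot all_order all_algebra.
From mathcomp Require Import all_classical all_reals all_analysis.
Set Implicit Arguments. Unset Strict Implicit. Unset Printing Implicit Defensive.
Local Open Scope classical_set_scope.

(* Source alpha, target beta; composition c1 c2 is defined when
   alpha c1 = beta c2 (mul is a total function whose values outside the
   composable pairs are irrelevant); units i; inversion inv. *)
Record Xgroupoid (X C : topologicalType) := {
  src : C -> X ;
  tgt : C -> X ;
  mul : C -> C -> C ;
  unt : X -> C ;
  inv : C -> C ;
  src_cont : continuous src ;
  tgt_cont : continuous tgt ;
  mul_cont : {within [set p : C * C | src p.1 = tgt p.2],
                continuous (fun p : C * C => mul p.1 p.2)} ;
  src_mul : forall c1 c2, src c1 = tgt c2 -> src (mul c1 c2) = src c2 ;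
  tgt_mul : forall c1 c2, src c1 = tgt c2 -> tgt (mul c1 c2) = tgt c1 ;
  mulA : forall c1 c2 c3, src c1 = tgt c2 -> src c2 = tgt c3 ->
           mul c1 (mul c2 c3) = mul (mul c1 c2) c3 ;
  unt_cont : continuous unt ;
  src_unt : forall x, src (unt x) = x ;
  tgt_unt : forall x, tgt (unt x) = x ;
  mul_unt_r : forall c, mul c (unt (src c)) = c ;
  mul_unt_l : forall c, mul (unt (tgt c)) c = c ;
  inv_cont : continuous inv ;
  src_inv : forall c, src (inv c) = tgt c ;
  tgt_inv : forall c, tgt (inv c) = src c ;
  mul_inv_r : forall c, mul c (inv c) = unt (tgt c) ;
  mul_inv_l : forall c, mul (inv c) c = unt (src c)
}.

Definition fib_src X C (G : Xgroupoid X C) (x : X) : set C := [set c | src G c = x].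
Definition fib_tgt X C (G : Xgroupoid X C) (y : X) : set C := [set c | tgt G c = y].
Definition hom X C (G : Xgroupoid X C) (x y : X) : set C :=
  fib_src G x `&` fib_tgt G y.

Definition vertex_group X C (G : Xgroupoid X C) (star : X) : set C :=
  hom G star star.

Definition contraction X C (G : Xgroupoid X C) (star : X)
    (U : set X) (rho : X -> C) : Prop :=
  open U /\ {within U, continuous rho} /\
  (forall x, U x -> fib_tgt G star (rho x)) /\
  (forall x, U x -> src G (rho x) = x).

Definition locally_trivial X C (G : Xgroupoid X C) (star : X) : Prop :=
  forall x : X, exists (U : set X) (rho : X -> C),
    contraction G star U rho /\ U x.

(* Main.v *)
From Pilot Require Import Defs.
From HB Require Import structures.
From mathcomp Require Import all_boot all_order all_algebra.
From mathcomp Require Import all_classical all_reals all_analysis.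
Local Open Scope classical_set_scope.
Set Implicit Arguments. Unset Strict Implicit.

Lemma cluster_map (S T : topologicalType) (f : S -> T) (a b : S) :
  f @ nbhs a --> f a -> f @ nbhs b --> f b ->
  cluster (nbhs a) b -> cluster (nbhs (f a)) (f b).
Proof.
move=> fa fb H A B NA NB.
have [z [Az Bz]] := H _ _ (fa _ NA) (fb _ NB).
by exists (f z).
Qed.

Lemma within_open_cvg (S T : topologicalType) (U : set S) (f : S -> T) (x : S) :
  open U -> U x -> {within U, continuous f} -> f @ nbhs x --> f x.
Proof.
move=> oU Ux cf.
have E : nbhs (x : subspace U) = nbhs x.
  by rewrite -[LHS]/(nbhs_subspace (x : subspace U)) -nbhs_subspace_in // within_interior // (proj1 (interior_id U) oU).
move=> P NP; have := cf (x : subspace U) P NP.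
by rewrite E.
Qed.

Lemma cvg_comp_within (S T V : topologicalType) (F : set_system S) (FF : Filter F)
  (f : S -> T) (g : T -> V) (D : set T) (a : T) :
  f @ F --> a -> (\forall x \near F, D (f x)) ->
  g @ within D (nbhs a) --> g a -> (g \o f) @ F --> g a.
Proof.
move=> ff Df gc P /gc WP.
have := ff _ WP.
move=> H; apply: filterS2 Df H => x Dx H; exact: H Dx.
Qed.

Lemma within_cont_at (S T : topologicalType) (D : set S) (f : S -> T) (x : S) :
  {within D, continuous f} -> D x -> f @ within D (nbhs x) --> f x.
Proof.
move=> cf Dx.
have E : nbhs (x : subspace D) = within D (nbhs x).
  by rewrite -[LHS]/(nbhs_subspace (x : subspace D)) -nbhs_subspace_in.
move=> P NP; have := cf (x : subspace D) P.
by rewrite E; apply.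
Qed.
Unset Implicit Arguments. Set Strict Implicit.
Import Pilot.Defs.
Section Alg.
Variables (X C : topologicalType) (G : Xgroupoid X C).
Lemma cancel_l a b : src G a = tgt G b -> mul G (inv G a) (mul G a b) = b.
Proof.
move=> e; rewrite (mulA (src_inv G a) e) mul_inv_l e; exact: mul_unt_l.
Qed.
Lemma cancel_r a b : src G a = src G b -> mul G (mul G a (inv G b)) b = a.
Proof.
move=> e; rewrite -(mulA _ (src_inv G b)); last by rewrite tgt_inv.
by rewrite mul_inv_l -e mul_unt_r.
Qed.
End Alg.

Theorem mainTheorem20 (X C : topologicalType) (star : X) (G : Xgroupoid X C) :
  locally_trivial G star ->
  (hausdorff_space C <->
   (hausdorff_space X /\ hausdorff_space (subspace (vertex_group G star)))).
Proof.
move=> lt; split.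
  move=> hC; split; last exact: subspace_hausdorff.
  move=> a b H.
  have := hC _ _ (cluster_map (@unt_cont _ _ G a) (@unt_cont _ _ G b) H).
  by move=> /(congr1 (src G)); rewrite !src_unt.
move=> [hX hO] c d H.
have es : src G c = src G d := hX _ _ (cluster_map (@src_cont _ _ G c) (@src_cont _ _ G d) H).
have et : tgt G c = tgt G d := hX _ _ (cluster_map (@tgt_cont _ _ G c) (@tgt_cont _ _ G d) H).
have [U [rho [[oU [crho [trho srho]]] Ux]]] := lt (src G c).
have [V [sig [[oV [csig [tsig ssig]]] Vy]]] := lt (tgt G c).
pose phi e := mul G (mul G (sig (tgt G e)) e) (inv G (rho (src G e))).
have phiC : forall e, U (src G e) -> V (tgt G e) -> phi @ nbhs e --> phi e.
  move=> e Ue Ve.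
  have s1 : (sig \o tgt G) @ nbhs e --> sig (tgt G e).
    exact: cvg_comp (@tgt_cont _ _ G e) (within_open_cvg oV Ve csig).
  have p1 : (fun z => (sig (tgt G z), z)) @ nbhs e --> (sig (tgt G e), e).
    exact: cvg_pair s1 cvg_id.
  have nV : \forall z \near nbhs e, V (tgt G z).
    by apply: (@tgt_cont _ _ G e); apply: open_nbhs_nbhs.
  have nU : \forall z \near nbhs e, U (src G z).
    by apply: (@src_cont _ _ G e); apply: open_nbhs_nbhs.
  have D1 : \forall z \near nbhs e,
      [set p : C * C | src G p.1 = tgt G p.2] (sig (tgt G z), z).
    by apply: filterS nV => z /ssig.
  have m1 : (fun z => mul G (sig (tgt G z)) z) @ nbhs e --> mul G (sig (tgt G e)) e.
    apply: (cvg_comp_within _ p1 D1 (g := fun p : C * C => mul G p.1 p.2)).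
    by apply: within_cont_at (@mul_cont _ _ G) _; rewrite /= ssig.
  have i1 : (inv G \o rho \o src G) @ nbhs e --> inv G (rho (src G e)).
    have r1 := within_open_cvg oU Ue crho.
    have r2 := cvg_comp _ _ (@src_cont _ _ G e) r1.
    have r3 := cvg_comp _ _ r2 (@inv_cont _ _ G _).
    exact: r3.
  have p2 : (fun z => (mul G (sig (tgt G z)) z, (inv G \o rho \o src G) z)) @ nbhs e
     --> (mul G (sig (tgt G e)) e, (inv G \o rho \o src G) e).
    exact: cvg_pair m1 i1.
  have D2 : \forall z \near nbhs e, [set p : C * C | src G p.1 = tgt G p.2]
      (mul G (sig (tgt G z)) z, (inv G \o rho \o src G) z).
    apply: filterS2 nU nV => z Uz Vz /=.
    by rewrite tgt_inv srho // src_mul // ssig.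
  have Dp : [set p : C * C | src G p.1 = tgt G p.2]
      (mul G (sig (tgt G e)) e, (inv G \o rho \o src G) e).
    by rewrite /= tgt_inv srho // src_mul // ssig.
  have := cvg_comp_within _ p2 D2 (within_cont_at (@mul_cont _ _ G) Dp).
  exact.
have inO : forall e, U (src G e) -> V (tgt G e) -> vertex_group G star (phi e).
  move=> e Ue Ve; split; rewrite /fib_src /fib_tgt /=.
    rewrite src_mul ?src_inv ?trho //.
    by rewrite tgt_inv srho // src_mul // ssig.
  rewrite tgt_mul ?tgt_mul ?tsig // ?ssig //.
  by rewrite tgt_inv srho // src_mul // ssig.
have Uc : U (src G c) by [].
have Vc : V (tgt G c) by [].
have Ud : U (src G d) by rewrite -es.
have Vd : V (tgt G d) by rewrite -et.
have Ephi : phi c = phi d.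
  apply: (hO (phi c : subspace _) (phi d : subspace _)).
  move=> P Q.
  rewrite -[nbhs (phi c : subspace _)]/(nbhs_subspace (phi c : subspace _)).
  rewrite -[nbhs (phi d : subspace _)]/(nbhs_subspace (phi d : subspace _)).
  rewrite -!nbhs_subspace_in; try exact: inO.
  move=> NP NQ.
  have W : \forall z \near nbhs c, U (src G z) /\ V (tgt G z).
    apply: filterI.
      by apply: (@src_cont _ _ G c); apply: open_nbhs_nbhs.
    by apply: (@tgt_cont _ _ G c); apply: open_nbhs_nbhs.
  have A1 : nbhs c (phi @^-1` [set t | vertex_group G star t -> P t]).
    exact: (phiC c Uc Vc _ NP).
  have A2 : nbhs d (phi @^-1` [set t | vertex_group G star t -> Q t]).
    exact: (phiC d Ud Vd _ NQ).
  have [z [[Pz [Uz Vz]] Qz]] := H _ _ (filterI A1 W) A2.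
  exists (phi z); split; [exact: Pz (inO z Uz Vz) | exact: Qz (inO z Uz Vz)].
move: Ephi; rewrite /phi -es -et.
move=> /(congr1 (fun f => mul G f (rho (src G c)))).
rewrite !cancel_r; last first.
- by rewrite srho // src_mul // ssig // -et.
- by rewrite srho // src_mul // ssig.
move=> /(congr1 (mul G (inv G (sig (tgt G c))))).
rewrite !cancel_l //; by rewrite ssig // et.
Qed.
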